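(* Let $p\ge 3$ and let $m_0,\dots,m_{p-1}$ be positive integers with $m=\sum_{i=0}^{p-1}m_i$ and $m_i<\lfloor m/2\rfloor$ for all $i$. Consider homogeneous communication parameters $\gamma=\beta=1$ and $0<\alpha<1$ with $\lceil\log_2 p\rceil\alpha<1$. Then every communication tree on $\{0,\dots,p-1\}$ that has minimum completion time among all such trees (with any root) has a root with at least two children, and its completion time is at least $m+2\alpha$.
   Context: Processors $0,\dots,p-1$; processor $i$ has a data block of size $m_i$; $\mathrm{Size}(R)=\sum_{i\in R}m_i$. Transmitting $s$ units between any two processors costs $\alpha+\beta s$; local copying of $s$ units costs $\gamma s$. A communication tree on a nonempty set $R$ with root $r\in R$ is either trivial ($R=\{r\}$), or the root $r$ with a sequence of entries $(E_0,\dots,E_j)$ where exactly one entry is a ''local copy'' marker, every other entry is a communication tree on a set $R_t$ with root $r_t$ (the children of $r$ are these $r_t$), there is at least one tree entry, and $\{r\}$ together with the $R_t$ partition $R$. Completion time: trivial tree $0$; otherwise $c_{-1}=0$, $c_t=c_{t-1}+\gamma m_r$ for the copy marker, $c_t=\max(c_{t-1},\mathrm{cost}(E_t))+\alpha+\beta\,\mathrm{Size}(R_t)$ for a tree entry; $\mathrm{cost}=c_j$. *)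

(* Defs.v *)
From mathcomp Require Import all_boot all_order all_algebra.
Set Implicit Arguments. Unset Strict Implicit. Unset Printing Implicit Defensive.
Import Order.TTheory GRing.Theory Num.Theory.

(* A tree is [CNode r es]: root processor [r] and a
   sequence of entries [es]; an entry is [None] (the "local copy" marker)
   or [Some t] (a subtree). *)
Inductive ctree : Type := CNode of nat & seq (option ctree).

Definition croot (t : ctree) : nat := let: CNode r _ := t in r.

Fixpoint cnodes (t : ctree) : seq nat :=
  let: CNode r es := t in
  r :: (fix go (es : seq (option ctree)) : seq nat :=
          match es with
          | [::] => [::]
          | None :: es' => go es'
          | Some t' :: es' => cnodes t' ++ go es'
          end) es.

Definition is_copy (e : option ctree) : bool :=
  if e is None then true else false.

Fixpoint cshape_ok (t : ctree) : bool :=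
  let: CNode r es := t in
  ((if es is [::] then true else false) ||
   ((count is_copy es == 1%N) && has (fun e => ~~ is_copy e) es)) &&
  (fix go (es : seq (option ctree)) : bool :=
     match es with
     | [::] => true
     | None :: es' => go es'
     | Some t' :: es' => cshape_ok t' && go es'
     end) es.

(* [t] is a communication tree on {0,...,p-1}: shape is correct and the
   processor sets {r} and R_t partition {0,...,p-1} (recursively; global
   duplicate-freeness of [cnodes t] gives disjointness at every level). *)
Definition ctree_on (p : nat) (t : ctree) : bool :=
  cshape_ok t && perm_eq (cnodes t) (iota 0 p).

Definition nchildren (t : ctree) : nat :=
  let: CNode _ es := t in count (fun e => ~~ is_copy e) es.

Section Cost.
Local Open Scope ring_scope.
Variable (R : realFieldType) (m : nat -> nat) (alpha beta gamma : R).

Definition csize (t : ctree) : nat := (\sum_(i <- cnodes t) m i)%N.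

Fixpoint ccost (t : ctree) : R :=
  let: CNode r es := t in
  if es is [::] then 0 else
  (fix go (c : R) (es : seq (option ctree)) : R :=
     match es with
     | [::] => c
     | None :: es' => go (c + gamma * (m r)%:R) es'
     | Some t' :: es' =>
         go (Num.max c (ccost t') + alpha + beta * (csize t')%:R) es'
     end) 0 es.
End Cost.

(* Main.v *)
Require Import Defs.
From mathcomp Require Import all_boot all_order all_algebra.
From mathcomp Require Import zify lra.
Import Order.TTheory GRing.Theory Num.Theory.
Local Open Scope ring_scope.

Fixpoint cn_go (es : seq (option ctree)) : seq nat :=
  match es with
  | [::] => [::]
  | None :: es' => cn_go es'
  | Some t' :: es' => cnodes t' ++ cn_go es'
  end.

Lemma cnodesE r es : cnodes (CNode r es) = r :: cn_go es.
Proof. by []. Qed.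

Fixpoint sh_go (es : seq (option ctree)) : bool :=
  match es with
  | [::] => true
  | None :: es' => sh_go es'
  | Some t' :: es' => cshape_ok t' && sh_go es'
  end.

Lemma cshapeE r es : cshape_ok (CNode r es) =
  ((if es is [::] then true else false) ||
   ((count is_copy es == 1%N) && has (fun e => ~~ is_copy e) es)) && sh_go es.
Proof. by []. Qed.

Lemma cn_go_cat es1 es2 : cn_go (es1 ++ es2) = cn_go es1 ++ cn_go es2.
Proof. by elim: es1 => [|[t|] es IH] //=; rewrite IH catA. Qed.

Lemma sh_go_cat es1 es2 : sh_go (es1 ++ es2) = sh_go es1 && sh_go es2.
Proof. by elim: es1 => [|[t|] es IH] //=; rewrite IH andbA. Qed.

Section C.
Variable (R : realFieldType) (m : nat -> nat) (alpha : R).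

Section G.
Variable r : nat.
Fixpoint gof (c : R) (es : seq (option ctree)) : R :=
  match es with
  | [::] => c
  | None :: es' => gof (c + 1 * (m r)%:R) es'
  | Some t' :: es' =>
      gof (Num.max c (ccost m alpha 1 1 t') + alpha + 1 * (csize m t')%:R) es'
  end.
End G.

Lemma ccostE r e es : ccost m alpha 1 1 (CNode r (e :: es)) = gof r 0 (e :: es).
Proof. by []. Qed.

Lemma gof_cat r c es1 es2 : gof r c (es1 ++ es2) = gof r (gof r c es1) es2.
Proof. by elim: es1 c => [|[t|] es IH] c //=. Qed.

Lemma gof_lb r c es :
  c + (count is_copy es)%:R * (m r)%:R
    + (count (fun e => ~~ is_copy e) es)%:R * alpha
    + (\sum_(i <- cn_go es) m i)%N%:R <= gof r c es.
Proof.
elim: es c => [|[t|] es IH] c /=.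
- by rewrite big_nil !mulr0n !mul0r !addr0.
- apply: le_trans (IH _).
  rewrite big_cat /= add0n !natrD mulrDl mul1r.
  have h : c <= Num.max c (ccost m alpha 1 1 t) by rewrite le_max lexx.
  rewrite /csize; lra.
- apply: le_trans (IH _).
  rewrite add0n !natrD mulrDl mul1r; lra.
Qed.
End C.

Lemma reroot (R : realFieldType) (p : nat) (m : nat -> nat) (alpha : R) r tc :
  cshape_ok tc -> (2 <= size (cnodes tc))%N -> perm_eq (r :: cnodes tc) (iota 0 p) ->
  exists t', ctree_on p t' /\
    ccost m alpha 1 1 t' = Num.max (ccost m alpha 1 1 tc) 0 + alpha + 1 * (m r)%:R.
Proof.
case: tc => rc esc; rewrite cnodesE cshapeE => /andP[hs hg] hsz hperm.
case: esc hs hg hsz hperm => [|e0 esc'] hs hg hsz hperm; first by move: hsz.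
exists (CNode rc (rcons (e0 :: esc') (Some (CNode r [::])))); split.
- apply/andP; split.
  + rewrite cshapeE -cats1 count_cat has_cat sh_go_cat.
    move: hs; rewrite orFb => /andP[/eqP -> ->]; rewrite hg.
    by [].
  + rewrite cnodesE -cats1 cn_go_cat.
    apply: perm_trans hperm.
    have -> : cn_go [:: Some (CNode r [::])] = [:: r] by [].
    by rewrite -cat_cons cats1 perm_rcons.
- have -> : ccost m alpha 1 1 (CNode rc (rcons (e0 :: esc') (Some (CNode r [::]))))
     = gof R m alpha rc 0 (rcons (e0 :: esc') (Some (CNode r [::]))) by [].
  rewrite -cats1 gof_cat -ccostE.
  have -> : forall c u, gof R m alpha rc c [:: Some u]
     = Num.max c (ccost m alpha 1 1 u) + alpha + 1 * (csize m u)%:R by [].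
  have -> : ccost m alpha 1 1 (CNode r [::]) = 0 by [].
  by rewrite /csize big_seq1.
Qed.

Theorem lemma1 (R : realFieldType) (p : nat) (m : nat -> nat) (alpha : R) :
  (3 <= p)%N ->
  (forall i, (i < p)%N -> (0 < m i)%N) ->
  (forall i, (i < p)%N -> (m i < (\sum_(j < p) m j) %/ 2)%N) ->
  0 < alpha -> alpha < 1 ->
  (up_log 2 p)%:R * alpha < 1 ->
  forall t : ctree, ctree_on p t ->
  (forall t' : ctree, ctree_on p t' -> ccost m alpha 1 1 t <= ccost m alpha 1 1 t') ->
  (2 <= nchildren t)%N /\
  ((\sum_(j < p) m j)%N)%:R + 2 * alpha <= ccost m alpha 1 1 t.
Proof.
move=> hp hpos hlt ha0 ha1 _ [r es] /andP[hsh hperm] hopt.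
have hsum : (m r + \sum_(i <- cn_go es) m i)%N = (\sum_(j < p) m j)%N.
  have : (\sum_(i <- cnodes (CNode r es)) m i)%N = (\sum_(j < p) m j)%N.
    by rewrite (perm_big _ hperm) -(big_mkord xpredT) /index_iota subn0.
  by rewrite cnodesE big_cons.
have hsize : size (cn_go es) = p.-1.
  by have := perm_size hperm; rewrite cnodesE size_iota /= => <-.
have hr : (r < p)%N.
  by have := perm_mem hperm r; rewrite cnodesE mem_head mem_iota add0n => /esym.
have hrlt := hlt r hr.
case: es hsh hperm hopt hsum hsize => [|e es] hsh hperm hopt hsum hsize.
  by move: hsize hp => /=; lia.
move: hsh; rewrite cshapeE orFb => /andP[/andP[/eqP hc1 hhas] hg].
have hlb := gof_lb R m alpha r 0 (e :: es).
rewrite hc1 -ccostE in hlb.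
have hk : (0 < count (fun e => ~~ is_copy e) (e :: es))%N by rewrite -has_count.
rewrite /nchildren.
case: (leqP 2 (count (fun e => ~~ is_copy e) (e :: es))) => hk2.
  split => //.
  rewrite -hsum natrD.
  have : 2%:R <= (count (fun e => ~~ is_copy e) (e :: es))%:R :> R by rewrite ler_nat.
  move=> hk2R; have := ler_wpM2r (ltW ha0) hk2R.
  move: hlb; set k := (count _ _)%:R; set S := (\sum_(i <- _) _)%:R; set c := ccost _ _ _ _ _.
  set ka := k * alpha; set mr := (m r)%:R.
  lra.
exfalso.
have k1 : count (fun e => ~~ is_copy e) (e :: es) = 1%N.
  by apply/eqP; rewrite eqn_leq hk andbT; exact: hk2.
have hsz : size (e :: es) = 2%N.
  rewrite -(count_predC is_copy) hc1.
  have -> : count (predC is_copy) (e :: es) = 1%N by rewrite -k1; apply: eq_count.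
  by [].
case: es hsz hperm hopt hsum hsize hc1 hhas hg hlb hk hk2 k1 => [|e2 [|]] //= _.
case: e => [tc|]; case: e2 => [tc2|] //= hperm hopt hsum hsize hc1 hhas hg hlb hk hk2 k1.
- rewrite cats0 in hperm hsum hsize; rewrite andbT in hg.
  have hs2 : (2 <= size (cnodes tc))%N by rewrite hsize -subn1; lia.
  have [t' [ht' hc']] := @reroot R p m alpha _ _ hg hs2 hperm.
  have := hopt t' ht'; rewrite hc'.
  have hlt2 : (m r < csize m tc)%N by move: hsum hrlt; rewrite /csize; move: (\sum_(j < p) m j)%N (\sum_(i <- cnodes _) m i)%N => M S; lia.
  have : (m r)%:R < (csize m tc)%:R :> R by rewrite ltr_nat.
  have : 0 <= (m r)%:R :> R by rewrite ler0n.
  rewrite maxC; lra.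
- rewrite cats0 in hperm hsum hsize; rewrite andbT in hg.
  have hs2 : (2 <= size (cnodes tc2))%N by rewrite hsize -subn1; lia.
  have [t' [ht' hc']] := @reroot R p m alpha _ _ hg hs2 hperm.
  have := hopt t' ht'; rewrite hc'.
  have hlt2 : (m r < csize m tc2)%N by move: hsum hrlt; rewrite /csize; move: (\sum_(j < p) m j)%N (\sum_(i <- cnodes _) m i)%N => M S; lia.
  have : (m r)%:R < (csize m tc2)%:R :> R by rewrite ltr_nat.
  have : Num.max (ccost m alpha 1 1 tc2) 0 <= Num.max (0 + 1 * (m r)%:R) (ccost m alpha 1 1 tc2).
    rewrite ge_max !le_max lexx orbT /= add0r mul1r ler0n //.
  lra.
Qed.
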